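(* Let $\mathbb{M}$ be the generic structure of the class $\mathbb{C}$ and $\widehat{\mathbb{M}}=(\mathcal{G}(\mathbb{M}))^{\mathrm{geo}}$. Whenever $A$ is a finite substructure of $\mathbb{M}$ with $A\le\mathbb{M}$, then $\widehat{A}\le\widehat{\mathbb{M}}$, where $\widehat{A}=(\mathcal{G}(A))^{\mathrm{geo}}$; additionally $\delta_s(A)=\delta_s(\widehat{A})$.
   Context: Fix a natural number $n$ and a symmetric irreflexive $n$-ary relation symbol $S$; substructures are induced. For an $\{S\}$-structure $A$, $K\subseteq A$ with $|K|\ge n$ is a clique if all $n$-element subsets of $K$ (as tuples of distinct elements) lie in $S^A$; maximal cliques are those not properly contained in another clique; $\mathcal{M}(A)$ is the set of maximal cliques. For finite $X$, $|X|_*=\max\{0,|X|-(n-1)\}$; for finite $A$, $\delta_s(A)=|A|-\sum_{K\in\mathcal{M}(A)}|K|_*$; for finite $B\subseteq A$, $\delta_s(A/B)=\delta_s(A)-\delta_s(B)$, and for arbitrary $B\subseteq A$, $\delta_s(A/B)=\inf\{\delta_s(X/X\cap B):X\subseteq A\text{ finite}\}$; $B\le A$ means $\delta_s(X/B)\ge0$ for all $X$ with $B\subseteq X\subseteq A$. An embedding $f:A\to B$ is strong if $f[A]\le B$. $\mathcal{C}^{\mathrm{clq}}_0$: finite $\{S\}$-structures in which distinct maximal cliques meet in fewer than $n$ points; $\mathcal{C}^{\mathrm{clq}}$: those $A\in\mathcal{C}^{\mathrm{clq}}_0$ with $\{a\}\le A$ for all $a$; $\mathcal{C}^{\mathrm{sym}}$: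 those $A\in\mathcal{C}^{\mathrm{clq}}$ all of whose maximal cliques have exactly $n$ elements. For an $\{S\}$-structure $A$ with $\{a\}\le A$ for all $a$, the associated geometry $\mathcal{G}(A)$ is the geometry (finitary matroid with $\mathrm{cl}(\emptyset)=\emptyset$, singletons closed) on the universe of $A$ with dimension $d(X)=\inf\{\delta_s(Y):X\subseteq Y\subseteq A,\ Y\text{ finite}\}$ for finite $X$. A geometry is $m$-pure if $m$ is the maximal natural number such that every $m$-element subset is independent. For a geometry $\mathbf{A}$ on $A$, $\mathbf{A}^{\mathrm{geo}}$ is the $\{S\}$-structure on $A$ whose maximal cliques are exactly the sets $\mathrm{cl}_{\mathbf{A}}(C)$, $C\in[A]^{n-1}$, $\mathrm{cl}_{\mathbf{A}}(C)\neq C$. $\mathbb{C}$ is the class of $A\in\mathcal{C}^{\mathrm{sym}}$ with $\mathcal{G}(A)$ $(n-1)$-pure; it is closed under isomorphism and substructures and has the joint embedding and amalgamation properties with respect to strong embeddings. Its generic structure $\mathbb{M}$ is the unique countable structure whose finite substructures lie in $\mathbb{C}$ and such that whenever $A\le\mathbb{M}$ is finite and $A\le D\in\mathbb{C}$, there is an embedding $f:D\to\mathbb{M}$ fixing $A$ pointwise with $f[D]\le\mathbb{M}$. *)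

(* Defs.v *)
From HB Require Import structures.
From mathcomp Require Import all_boot all_order ssralg ssrnum ssrint.
From mathcomp Require Import finmap.
From mathcomp Require Import boolp.

Set Implicit Arguments.
Unset Strict Implicit.
Unset Printing Implicit Defensive.

Local Open Scope fset_scope.

Section Defs.
Variable n : nat.
Variable T : choiceType.
Implicit Types (S : seq T -> Prop) (X Y K B C : {fset T}) (U : T -> Prop).

(* S is a symmetric irreflexive n-ary relation (tuples as sequences). *)
Definition validRel S :=
  (forall t, S t -> size t = n /\ uniq t) /\
  (forall t t', perm_eq t t' -> S t -> S t').

Definition is_clique S K :=
  n <= #|` K| /\
  forall t : seq T, size t = n -> uniq t -> {subset t <= K} -> S t.

Definition is_maxclique S X K :=
  K `<=` X /\ is_clique S K /\
  forall K' : {fset T}, K `<` K' -> K' `<=` X -> ~ is_clique S K'.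

(* |K|_* = max{0, |K| - (n-1)} *)
Definition starsize K : nat := #|` K| - n.-1.

Definition delta S X : int :=
  (Posz #|` X| - Posz (\sum_(K <- fpowerset X | `[< is_maxclique S X K >]) starsize K))%R.

Definition fin_set (Z : T -> Prop) := exists F : {fset T}, forall x, Z x <-> x \in F.

(* B <= U (B finite, U the universe of the ambient structure):
   delta(X/B) >= 0 for all X with B ⊆ X ⊆ U; for finite X,
   delta(X/B) = delta(X) - delta(B); for infinite X,
   delta(X/B) = inf { delta(X') - delta(X' ∩ B) : X' ⊆ X finite }. *)
Definition strong S B U :=
  (forall x, x \in B -> U x) /\
  (forall X, B `<=` X -> (forall x, x \in X -> U x) -> (delta S B <= delta S X)%R) /\
  (forall Z : T -> Prop, ~ fin_set Z -> (forall x, x \in B -> Z x) -> (forall x, Z x -> U x) ->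
     forall X', (forall x, x \in X' -> Z x) -> (delta S (X' `&` B) <= delta S X')%R).

(* d(X) = k in the geometry of the structure with universe U:
   k = inf { delta(Y) : X ⊆ Y ⊆ U, Y finite } (attained, as values are in int) *)
Definition is_dim S U X (k : int) :=
  (exists Y : {fset T}, X `<=` Y /\ (forall y, y \in Y -> U y) /\ delta S Y = k) /\
  (forall Y : {fset T}, X `<=` Y -> (forall y, y \in Y -> U y) -> (k <= delta S Y)%R).

Definition independent S U X := is_dim S U X (Posz #|` X|).

Definition gcl S U X : T -> Prop :=
  fun a => U a /\ exists k, is_dim S U X k /\ is_dim S U (a |` X) k.

(* the relation of G(A)^geo: n-tuples of distinct elements lying in some
   cl(C), C an (n-1)-subset with cl(C) <> C; its maximal cliques are these cl(C) *)
Definition geoRel S U : seq T -> Prop :=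
  fun t => size t = n /\ uniq t /\
    exists C : {fset T}, (forall c, c \in C -> U c) /\ #|` C| = n.-1 /\
      (exists a, gcl S U C a /\ a \notin C) /\ (forall x, x \in t -> gcl S U C x).

Definition inC S X :=
  (forall K K', is_maxclique S X K -> is_maxclique S X K' -> K <> K' ->
      #|` K `&` K'| < n) /\
  (forall a, a \in X -> strong S [fset a] (fun x => x \in X)) /\
  (forall K, is_maxclique S X K -> #|` K| = n) /\
  (forall Y, Y `<=` X -> #|` Y| = n.-1 -> independent S (fun x => x \in X) Y).

End Defs.

Definition embedding (T' T : choiceType) (S' : seq T' -> Prop) (S : seq T -> Prop)
    (D : {fset T'}) (f : T' -> T) :=
  {in D &, injective f} /\
  forall t : seq T', {subset t <= D} -> (S' t <-> S (map f t)).

(* (T, S) (universe all of the countable type T) is the generic structure of C *)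
Definition generic (n : nat) (T : countType) (S : seq T -> Prop) :=
  validRel n S /\
  (forall X : {fset T}, inC n S X) /\
  (forall A : {fset T}, strong n S A (fun _ => True) ->
    forall (T' : choiceType) (S' : seq T' -> Prop) (D : {fset T'}) (g : T -> T'),
      validRel n S' -> inC n S' D -> embedding S S' A g ->
      strong n S' [fset g x | x in A] (fun x => x \in D) ->
      exists f : T' -> T, embedding S' S D f /\ (forall a, a \in A -> f (g a) = a) /\
        strong n S [fset f x | x in D] (fun _ => True)).

(* Main.v *)
Require Import Defs.
From HB Require Import structures.
From mathcomp Require Import all_boot all_order ssralg ssrnum ssrint.
From mathcomp Require Import finmap.
From mathcomp Require Import boolp.
From mathcomp Require Import zify.
Set Implicit Arguments.
Unset Strict Implicit.
Unset Printing Implicit Defensive.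
Local Open Scope fset_scope.

Section Main.
Variable n : nat.
Variable T : countType.
Variable S : seq T -> Prop.
Hypothesis n0 : (0 < n)%N.
Hypothesis gen : generic n S.

Let clq (K : {fset T}) := is_clique n S K.
Let E (X : {fset T}) := [fset K in fpowerset X | `[< clq K >]].
Let e X := #|` E X|.

Lemma inE_E X K : (K \in E X) = (K `<=` X) && `[< clq K >].
Proof. by rewrite /E !inE /= -fpowersetE. Qed.

Lemma inCall X : inC n S X.
Proof. by case: gen => _ []. Qed.

Lemma clq_size K : clq K -> #|` K| = n.
Proof.
move=> cK; have [_ [_ [H _]]] := inCall K; apply: H.
split; first exact: fsubset_refl.
split=> // K' pK sK.
by move: (fproper_ltn_card pK) (fsubset_leq_card sK); lia.
Qed.

Lemma mc_iff X K : is_maxclique n S X K <-> K `<=` X /\ clq K.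
Proof.
split; first by case=> [? [? _]].
case=> sK cK; split=> //; split=> // K' pK _ cK'.
move: (fproper_ltn_card pK); rewrite (clq_size cK) (clq_size cK'); lia.
Qed.

Lemma delta_e X : delta n S X = (#|` X|%:Z - (e X)%:Z)%R.
Proof.
rewrite /delta /e; congr (_ - Posz _)%R.
rewrite big_fset_condE card_fset_sum1.
have -> : [fset K in fpowerset X | `[< is_maxclique n S X K >]] = E X.
  apply/fsetP => K; rewrite inE_E !inE /= fpowersetE.
  by apply/idP/idP => /andP[a b]; apply/andP; split=> //;
    move: b; rewrite !asboolE => b; [case/mc_iff: b | apply/mc_iff].
rewrite big_seq [RHS]big_seq; apply: eq_bigr => K.
rewrite inE_E => /andP[_]; rewrite asboolE => cK; rewrite /starsize (clq_size cK); lia.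
Qed.

Lemma E_mono X Y : X `<=` Y -> E X `<=` E Y.
Proof.
move=> sXY; apply/fsubsetP => K; rewrite !inE_E => /andP[sK ->].
by rewrite (fsubset_trans sK sXY).
Qed.

Lemma E_I X Y : E (X `&` Y) = E X `&` E Y.
Proof.
apply/fsetP => K; rewrite in_fsetI !inE_E fsubsetI.
by case: (K `<=` X); case: (K `<=` Y); case: `[< clq K >].
Qed.

Lemma e_submod X Y : (e X + e Y <= e (X `|` Y) + e (X `&` Y))%N.
Proof.
rewrite /e E_I -cardfsUI leq_add2r; apply: fsubset_leq_card.
by rewrite fsubUset !E_mono ?fsubsetUl ?fsubsetUr.
Qed.

Lemma submod X Y : (delta n S (X `|` Y) + delta n S (X `&` Y) <= delta n S X + delta n S Y)%R.
Proof.
rewrite !delta_e; have := e_submod X Y; have := cardfsUI X Y; lia.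
Qed.

Lemma PL C Z : #|` C| = n.-1 -> C `<=` Z -> ((Posz n.-1) <= delta n S Z)%R.
Proof.
move=> cC sCZ; have [_ [_ [_ H]]] := inCall Z.
have [_ H2] := H C sCZ cC; rewrite -cC; apply: H2; first exact: sCZ.
by move=> y.
Qed.

Lemma sub_card (Z : {fset T}) k : (k <= #|` Z|)%N -> exists C, C `<=` Z /\ #|` C| = k.
Proof.
move=> kZ; exists [fset x in take k (enum_fset Z)]; split.
  by apply/fsubsetP => x; rewrite inE => /mem_take.
rewrite card_fseq undup_id ?take_uniq ?fset_uniq // size_take.
move: kZ; rewrite cardfE -(cardfE Z); case: ltnP => //; lia.
Qed.

Lemma E1 Z : (e Z <= #|` Z| - n.-1)%N.
Proof.
case: (ltnP #|` Z| n) => hZ.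
  suff -> : e Z = 0%N by [].
  apply/eqP; rewrite cardfs_eq0; apply/eqP/fsetP => K; rewrite inE_E in_fset0.
  apply/negbTE/negP => /andP[sK]; rewrite asboolE => cK.
  by move: (fsubset_leq_card sK); rewrite (clq_size cK); lia.
have [C [sC cC]] := sub_card (Z := Z) (k := n.-1) (ltac:(lia)).
have := PL cC sC; rewrite delta_e; lia.
Qed.

Lemma deltaC C : #|` C| = n.-1 -> delta n S C = (Posz n.-1).
Proof. move=> cC; rewrite delta_e; have := E1 C; rewrite cC subnn; lia. Qed.

Definition inU (U : T -> Prop) (Y : {fset T}) := forall y, y \in Y -> U y.

Lemma UL (U : T -> Prop) C (s : seq T) : #|` C| = n.-1 -> inU U C ->
  (forall x, x \in s -> exists Y, C `<=` Y /\ x \in Y /\ inU U Y /\ (delta n S Y <= (Posz n.-1))%R) ->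
  exists Y, C `<=` Y /\ {subset s <= Y} /\ inU U Y /\ (delta n S Y <= (Posz n.-1))%R.
Proof.
move=> cC uC; elim: s => [|x s IH] H.
  by exists C; split; [exact: fsubset_refl|split=> //; split=> //; rewrite deltaC].
have [Y0 [sC0 [ss0 [u0 d0]]]] := IH (fun y ys => H y (mem_behead (s := x :: s) ys)).
have [Y1 [sC1 [xY1 [u1 d1]]]] := H x (mem_head _ _).
exists (Y0 `|` Y1); split; first by rewrite fsubsetU // sC0.
split.
  move=> y; rewrite inE => /orP[/eqP->|ys]; rewrite in_fsetU ?xY1 ?orbT //.
  by rewrite ss0.
split; first by move=> y; rewrite in_fsetU => /orP[]; [apply: u0|apply: u1].
have := submod Y0 Y1; have : C `<=` Y0 `&` Y1 by rewrite fsubsetI sC0 sC1.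
move/(PL cC) => h; move: d0 d1 h; lia.
Qed.

Lemma dim_uniq U X k k' : is_dim n S U X k -> is_dim n S U X k' -> k = k'.
Proof.
move=> [[Y [s [u d]]] h] [[Y' [s' [u' d']]] h'].
have := h Y' s' u'; have := h' Y s u; rewrite d d'; lia.
Qed.

Lemma dimC U C : #|` C| = n.-1 -> inU U C -> is_dim n S U C (Posz n.-1).
Proof.
move=> cC uC; split; first by exists C; split; [exact: fsubset_refl| split=> //; rewrite deltaC].
by move=> Y sY _; apply: PL cC sY.
Qed.

Lemma geo_iff U t : geoRel n S U t <->
  [/\ size t = n, uniq t & exists Y, {subset t <= Y} /\ inU U Y /\ (delta n S Y <= (Posz n.-1))%R].
Proof.
split.
  move=> [st [ut [C [uC [cC [_ ht]]]]]]; split=> //.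
  suff HU : forall x, x \in t -> exists Y, C `<=` Y /\ x \in Y /\ inU U Y /\ (delta n S Y <= (Posz n.-1))%R.
    by have [Y [_ [sY [uY dY]]]] := UL cC uC HU; exists Y.
  move=> x /ht [Ux [k [dk dk']]].
  have ek := dim_uniq dk (dimC cC uC); subst k.
  case: dk' => [[Y [sY [uY dY]]] _]; exists Y; split.
    by apply: fsubset_trans sY; apply: fsubsetU1.
  split; first by apply: (fsubsetP sY); rewrite in_fset1U eqxx.
  by split=> //; rewrite dY.
move=> [st ut [Y [sY [uY dY]]]].
have : size t != 0%N by rewrite st; lia.
case/lastP: t st ut sY => [//|t' a] st ut sY _.
have aN : a \notin t' by move: ut; rewrite rcons_uniq => /andP[].
have ut' : uniq t' by move: ut; rewrite rcons_uniq => /andP[].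
have cC : #|` [fset x in t']| = n.-1.
  by rewrite card_fseq undup_id //; move: st; rewrite size_rcons => <-.
have sCY : [fset x in t'] `<=` Y.
  by apply/fsubsetP => x; rewrite inE => xt; apply: sY; rewrite mem_rcons inE xt orbT.
have uC : inU U [fset x in t'] by move=> c /(fsubsetP sCY); apply: uY.
have gx : forall x, x \in Y -> gcl n S U [fset x in t'] x.
  move=> x xY; split; first exact: uY.
  exists (Posz n.-1); split; first exact: dimC.
  split.
    exists Y; split; first by rewrite fsubUset fsub1set xY.
    split=> //; have := PL cC sCY; move: dY; lia.
  by move=> Y' sY' _; apply: PL cC (fsubset_trans (fsubsetU1 _ _) sY').
split=> //; split=> //; exists [fset x in t']; split=> //; split=> //; split.
  by exists a; split; [apply: gx; apply: sY; rewrite mem_rcons mem_head | rewrite inE].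
by move=> x /sY; apply: gx.
Qed.

Let GR := geoRel n S (fun _ => True).

Lemma clqGR_iff K : is_clique n GR K <->
  (n <= #|` K|)%N /\ exists Y, K `<=` Y /\ (delta n S Y <= (Posz n.-1))%R.
Proof.
split; last first.
  move=> [cK [Y [sY dY]]]; split=> // t st ut tK; apply/geo_iff; split=> //.
  by exists Y; split=> // x /tK; apply: (fsubsetP sY).
move=> [cK H].
have [C [sC cC]] := sub_card (Z := K) (k := n.-1) (ltac:(lia)).
have uC : inU (fun _ => True) C by [].
suff HU : forall x, x \in enum_fset K -> exists Y, C `<=` Y /\ x \in Y /\ inU (fun _ => True) Y /\ (delta n S Y <= (Posz n.-1))%R.
  have [Y [_ [sY [_ dY]]]] := UL cC uC HU; split=> //; exists Y; split=> //.
  by apply/fsubsetP => x xK; apply: sY.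
move=> x xK; case: (boolP (x \in C)) => xC.
  by exists C; split; [exact: fsubset_refl|split=> //; split=> //; rewrite deltaC].
have gt : GR (enum_fset (x |` C)).
apply: H.
- by rewrite cardfsU1 xC cC; lia.
- exact: fset_uniq.
- move=> y; rewrite -[y \in enum_fset _]/(y \in x |` C) in_fset1U => /orP[/eqP->//|].
  by move/(fsubsetP sC).
move/geo_iff: gt => [_ _ [Y [sY [_ dY]]]]; exists Y; split.
  by apply/fsubsetP => c cc; apply: sY; rewrite -[c \in enum_fset _]/(c \in x |` C) in_fset1U cc orbT.
split; first by apply: sY; rewrite -[x \in enum_fset _]/(x \in x |` C) in_fset1U eqxx.
by [].
Qed.

Lemma clq_union K1 K2 : is_clique n GR K1 -> is_clique n GR K2 ->
  (n.-1 <= #|` K1 `&` K2|)%N -> is_clique n GR (K1 `|` K2).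
Proof.
move=> /clqGR_iff [c1 [Y1 [s1 d1]]] /clqGR_iff [c2 [Y2 [s2 d2]]] c12.
apply/clqGR_iff; split.
  by apply: leq_trans c1 _; apply: fsubset_leq_card; apply: fsubsetUl.
exists (Y1 `|` Y2); split; first exact: fsetUSS.
have [C [sC cC]] := sub_card c12.
have : C `<=` Y1 `&` Y2 by apply: fsubset_trans sC _; apply: fsetISS.
move/(PL cC) => h; have := submod Y1 Y2; move: d1 d2 h; lia.
Qed.

Lemma clq_sub (R : seq T -> Prop) K K' : is_clique n R K -> K' `<=` K -> (n <= #|` K'|)%N -> is_clique n R K'.
Proof.
move=> [_ H] sK cK'; split=> // t st ut tK; apply: H => // x /tK; apply: (fsubsetP sK).
Qed.

Lemma mc_exists (R : seq T -> Prop) X K : K `<=` X -> is_clique n R K ->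
  exists L, K `<=` L /\ is_maxclique n R X L.
Proof.
move Hm : (#|` X| - #|` K|)%N => m.
elim: m {-2}m (leqnn m) K Hm => [|m IH] m' hm K Hm sK cK.
- exists K; split; first exact: fsubset_refl.
  split=> //; split=> // K' pK sK' _.
  move: (fproper_ltn_card pK) (fsubset_leq_card sK'); lia.
- case: (pselect (exists K', K `<` K' /\ K' `<=` X /\ is_clique n R K')) => [[K' [pK [sK' cK']]]|nK].
    have [L [sL mL]] := IH (#|` X| - #|` K'|)%N ltac:(move: (fproper_ltn_card pK) (fsubset_leq_card sK'); lia) K' erefl sK' cK'.
    by exists L; split=> //; apply: fsubset_trans sL; apply: fproper_sub.
  exists K; split; first exact: fsubset_refl.
  split=> //; split=> // K' pK sK' cK'; apply: nK; by exists K'.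
Qed.

Lemma sum_if_count (I : eqType) (r : seq I) (p : pred I) c :
  (\sum_(i <- r) (if p i then c else 0) = c * count p r)%N.
Proof.
elim: r => [|x r IH]; first by rewrite big_nil muln0.
by rewrite big_cons IH /=; case: (p x); rewrite /= ?mulnDr ?muln1.
Qed.

Definition MC X := [seq L <- enum_fset (fpowerset X) | `[< is_maxclique n GR X L >]].

Lemma MC_uniq X : uniq (MC X).
Proof. by apply: filter_uniq; apply: fset_uniq. Qed.

Lemma inMC X L : (L \in MC X) <-> is_maxclique n GR X L.
Proof.
rewrite mem_filter; split; first by case/andP => /asboolP.
move=> h; apply/andP; split; first exact/asboolP.
case: h => sL _.
by rewrite -[L \in enum_fset _]/(L \in fpowerset X) fpowersetE.
Qed.

Lemma deltaGR X : delta n GR X = (#|` X|%:Z - (\sum_(L <- MC X) starsize n L)%N%:Z)%R.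
Proof. by rewrite /delta big_filter. Qed.

Lemma mc_union_eq X L L' : is_maxclique n GR X L -> is_maxclique n GR X L' ->
  is_clique n GR (L `|` L') -> L = L'.
Proof.
move=> [sL [cL mL]] [sL' [cL' mL']] cU.
have sU : L `|` L' `<=` X by rewrite fsubUset sL sL'.
have s1 : L' `<=` L.
  apply/negPn/negP => nL; apply: (mL (L `|` L')) => //.
  by rewrite fproperE fsubsetUl /= fsubUset fsubset_refl.
have s2 : L `<=` L'.
  apply/negPn/negP => nL; apply: (mL' (L `|` L')) => //.
    by rewrite fproperE fsubsetUr /= fsubUset fsubset_refl andbT.
by apply/eqP; rewrite eqEfsubset s1 s2.
Qed.

Lemma mc_unique X L L' : is_maxclique n GR X L -> is_maxclique n GR X L' ->
  (n.-1 <= #|` L `&` L'|)%N -> L = L'.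
Proof.
move=> mL mL' h; apply: (mc_union_eq mL mL').
by case: mL => _ [cL _]; case: mL' => _ [cL' _]; apply: clq_union.
Qed.

Lemma mcI X P L : is_maxclique n GR X L -> (n <= #|` L `&` P|)%N ->
  is_maxclique n GR (X `&` P) (L `&` P).
Proof.
move=> [sL [cL mL]] h; split; first exact: fsetSI.
split; first by apply: clq_sub cL (fsubsetIl _ _) h.
move=> K' pK sK' cK'.
have sKP : K' `<=` P by apply: fsubset_trans sK' (fsubsetIr _ _).
have h' : (n.-1 <= #|` L `&` K'|)%N.
  apply: leq_trans (_ : n <= _)%N; first lia.
  apply: leq_trans h _; apply: fsubset_leq_card.
  by rewrite fsubsetI fsubsetIl; apply: fproper_sub.
apply: (mL (L `|` K')).
- rewrite fproperE fsubsetUl /= fsubUset fsubset_refl /=.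
  apply/negP => sKL; move: pK; rewrite fproperE => /andP[_ /negP]; apply.
  by rewrite fsubsetI sKL sKP.
- by rewrite fsubUset sL (fsubset_trans sK' (fsubsetIl _ _)).
- exact: clq_union cL cK' h'.
Qed.

Lemma mc_lift X P K : is_maxclique n GR (X `&` P) K ->
  exists L, is_maxclique n GR X L /\ L `&` P = K.
Proof.
move=> [sK [cK mK]].
have sKX : K `<=` X by apply: fsubset_trans sK (fsubsetIl _ _).
have [L [sKL mL]] := mc_exists sKX cK.
exists L; split=> //.
have sKLP : K `<=` L `&` P by rewrite fsubsetI sKL (fsubset_trans sK (fsubsetIr _ _)).
apply/eqP; rewrite eqEfsubset sKLP andbT.
apply/negPn/negP => nL; apply: (mK (L `&` P)).
- by rewrite fproperE sKLP nL.
- by case: mL => sL _; apply: fsetSI.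
- case: mL => _ [cL _]; apply: clq_sub cL (fsubsetIl _ _) _.
  by case: cK => cK _; apply: leq_trans cK (fsubset_leq_card sKLP).
Qed.

Lemma L9 X P : (\sum_(K <- MC (X `&` P)) starsize n K = \sum_(L <- MC X) starsize n (L `&` P))%N.
Proof.
pose F (L K : {fset T}) := if L `&` P == K then starsize n K else 0%N.
transitivity (\sum_(K <- MC (X `&` P)) \sum_(L <- MC X) F L K)%N.
  rewrite big_seq [RHS]big_seq; apply: eq_bigr => K /inMC mK.
  rewrite /F sum_if_count.
  have [L0 [mL0 eL0]] := mc_lift mK.
  rewrite (@eq_in_count _ _ (pred1 L0)).
    by rewrite count_uniq_mem ?MC_uniq //; have /inMC -> := mL0; rewrite muln1.
  move=> L /inMC mL /=; apply/eqP/eqP => [eL|->//].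
  apply: (mc_unique mL mL0).
  have cK : (n <= #|` K|)%N by case: mK => _ [[]].
  have sK : K `<=` L `&` L0 by rewrite fsubsetI -{1}eL -eL0 !fsubsetIl.
  move: (fsubset_leq_card sK); lia.
rewrite exchange_big /=; rewrite big_seq [RHS]big_seq; apply: eq_bigr => L /inMC mL.
rewrite /F.
transitivity (\sum_(K <- MC (X `&` P)) (if pred1 (L `&` P) K then starsize n (L `&` P) else 0))%N.
  by apply: eq_bigr => K _ /=; case: eqP => [->|]; rewrite ?eqxx //; case: eqP => // ->.
rewrite sum_if_count count_uniq_mem ?MC_uniq //.
case: (leqP n #|` L `&` P|) => h.
  by have /inMC -> := mcI mL h; rewrite muln1.
rewrite /starsize; have -> : (#|` L `&` P| - n.-1 = 0)%N by lia.
by rewrite mul0n.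
Qed.

Lemma arith1 (EP a s1 U b s2 D I : nat) : (EP + s1 <= D + s2 -> U + I = a + D -> I <= b ->
  EP + (a + s1) <= U + (b + s2))%N.
Proof. lia. Qed.

Lemma arith2 (m Y eY eYP YP YQ YmQ LmP LP Lc : nat) :
  (Y <= eY + m -> eYP <= YP - m -> YQ + YmQ = Y -> YP + LmP <= YQ ->
   LP + LmP = Lc -> LP <= YP -> m < Lc ->
   YmQ + (Lc - m) + eYP <= eY + (LP - m))%N.
Proof. lia. Qed.

Lemma arith3 (a b p x d er eP sEY sEYP r sYQ sS sSP : nat) :
  (a + b = p + x)%N -> (d <= er)%N -> (eP + sEY <= d + sEYP)%N -> (r <= a + sYQ)%N ->
   (sYQ + sS + sEYP <= sEY + sSP)%N ->
  (Posz r - Posz er + (Posz b - Posz sSP) <= Posz p - Posz eP + (Posz x - Posz sS))%R.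
Proof. lia. Qed.

Lemma cardU_le (K : choiceType) (A B : {fset K}) : (#|` A `|` B| <= #|` A| + #|` B|)%N.
Proof. have := cardfsUI A B; lia. Qed.

Lemma Rlemma P X : exists R, P `|` X `<=` R /\
  (delta n S R + delta n GR (X `&` P) <= delta n S P + delta n GR X)%R.
Proof.
have hY : forall L : {fset T}, exists Y : {fset T}, is_maxclique n GR X L ->
    L `<=` Y /\ (delta n S Y <= Posz n.-1)%R.
  move=> L; case: (pselect (is_maxclique n GR X L)) => [[_ [/clqGR_iff [_ [Y hY]] _]]|nL].
    by exists Y.
  by exists L.
have [Yf HYf] := choice hY.
pose ML := MC X.
pose Q := P `|` X.
pose RR := fun ls => foldr (fun L acc => Yf L `|` acc) Q ls.
pose DD := fun ls => foldr (fun L acc => E (Yf L) `|` acc) (E P) ls.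
have RQ : forall ls, Q `<=` RR ls.
  by elim=> [|L ls IH] /=; [exact: fsubset_refl | apply: fsubset_trans IH (fsubsetUr _ _)].
have RY : forall ls L, L \in ls -> Yf L `<=` RR ls.
  elim=> [//|L' ls IH] L /=; rewrite inE => /orP[/eqP->|Lls]; first exact: fsubsetUl.
  by apply: fsubset_trans (IH _ Lls) (fsubsetUr _ _).
have cardR : forall ls, (#|` RR ls| <= #|` Q| + \sum_(L <- ls) #|` Yf L `\` Q|)%N.
  elim=> [|L ls IH] /=; first by rewrite big_nil addn0.
  rewrite big_cons.
  have : Yf L `|` RR ls `<=` (Yf L `\` Q) `|` RR ls.
    apply/fsubsetP => x; rewrite !in_fsetU in_fsetD.
    case: (boolP (x \in Q)) => xQ /=; [by move=> _; apply: (fsubsetP (RQ ls)) | by []].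
  move/fsubset_leq_card => h; apply: leq_trans h _; apply: leq_trans (cardU_le _ _) _; by rewrite addnCA leq_add2l.
have ED : forall L L' K, is_maxclique n GR X L -> is_maxclique n GR X L' ->
    K \in E (Yf L) -> K \in E (Yf L') -> L = L'.
  move=> L L' K mL mL'; rewrite !inE_E => /andP[s1 c1] /andP[s2 _].
  move: c1; rewrite asboolE => /clq_size cK.
  have [C [sC cC]] := sub_card (Z := K) (k := n.-1) (ltac:(lia)).
  have : C `<=` Yf L `&` Yf L' by rewrite fsubsetI !(fsubset_trans sC).
  move/(PL cC) => hC.
  have [sL dL] := HYf L mL; have [sL' dL'] := HYf L' mL'.
  apply: (mc_union_eq mL mL'); apply/clqGR_iff; split.
    case: mL => _ [[cL _] _]; apply: leq_trans cL _; apply: fsubset_leq_card; exact: fsubsetUl.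
  exists (Yf L `|` Yf L'); split; first exact: fsetUSS.
  have := submod (Yf L) (Yf L'); move: dL dL' hC; lia.
have Dmem : forall ls K, K \in DD ls -> K \in E P \/ exists2 L', L' \in ls & K \in E (Yf L').
  elim=> [|L ls IH] K /=; first by left.
  rewrite in_fsetU => /orP[h|/IH [h|[L' h1 h2]]]; [right; exists L| left| right; exists L'] => //.
    by rewrite mem_head.
  by rewrite inE h1 orbT.
have cardD : forall ls, uniq ls -> (forall L, L \in ls -> is_maxclique n GR X L) ->
    (e P + \sum_(L <- ls) e (Yf L) <= #|` DD ls| + \sum_(L <- ls) e (Yf L `&` P))%N.
  elim=> [|L ls IH] /=; first by rewrite !big_nil.
  move=> /andP[Lls uls] hm; rewrite !big_cons.
  have := IH uls (fun L' h => hm L' (mem_behead (s := L :: ls) h)).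
  have : E (Yf L) `&` DD ls `<=` E (Yf L `&` P).
    apply/fsubsetP => K; rewrite in_fsetI => /andP[KY /Dmem [KP|[L' L'ls KY']]].
      by rewrite E_I in_fsetI KY KP.
    have eL := ED L L' K (hm L (mem_head _ _)) (hm L' (mem_behead (s := L :: ls) L'ls)) KY KY'.
    by move: Lls; rewrite eL L'ls.
  move/fsubset_leq_card => h1.
  move=> H2; exact: (arith1 H2 (cardfsUI (E (Yf L)) (DD ls)) h1).
have DR : DD ML `<=` E (RR ML).
  have : forall ls, DD ls `<=` E (RR ls).
    elim=> [|L ls IH] /=; first by apply: E_mono; apply: fsubsetUl.
    rewrite fsubUset; apply/andP; split; first by apply: E_mono; exact: fsubsetUl.
    by apply: fsubset_trans IH _; apply: E_mono; exact: fsubsetUr.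
  by apply.
have perL : forall L, L \in ML ->
    (#|` Yf L `\` Q| + starsize n L + e (Yf L `&` P) <= e (Yf L) + starsize n (L `&` P))%N.
  move=> L /inMC mL; have [sL dL] := HYf L mL.
  have sLX : L `<=` X by case: mL.
  have cL : (n <= #|` L|)%N by case: mL => _ [[]].
  have h1 : (#|` Yf L| <= e (Yf L) + n.-1)%N by move: dL; rewrite delta_e; lia.
  have h2 := E1 (Yf L `&` P).
  have h3 := cardfsID Q (Yf L).
  have h4 : (#|` Yf L `&` P| + #|` L `\` P| <= #|` Yf L `&` Q|)%N.
    have hd : (Yf L `&` P) `&` (L `\` P) = fset0.
      apply/fsetP => x; rewrite !inE; by case: (x \in P); rewrite ?andbF.
    have := cardfsUI (Yf L `&` P) (L `\` P); rewrite hd cardfs0 addn0 => <-.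
    apply: fsubset_leq_card; rewrite fsubUset; apply/andP; split.
      by apply: fsetIS; apply: fsubsetUl.
    apply/fsubsetP => x; rewrite !inE => /andP[_ xL].
    by rewrite (fsubsetP sL x xL) (fsubsetP sLX x xL) orbT.
  have h5 := cardfsID P L.
  have h6 : (#|` L `&` P| <= #|` Yf L `&` P|)%N by apply: fsubset_leq_card; apply: fsetSI.
  rewrite /starsize; apply: (arith2 h1 h2 h3 h4 h5 h6); lia.
exists (RR ML); split; first exact: RQ.
have hsum : (\sum_(L <- ML) (#|` Yf L `\` Q| + starsize n L + e (Yf L `&` P)) <=
             \sum_(L <- ML) (e (Yf L) + starsize n (L `&` P)))%N.
  by rewrite big_seq [X in (_ <= X)%N]big_seq; apply: leq_sum => L; apply: perL.
rewrite !big_split /= in hsum.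
have h1 := cardR ML; have h2 := cardD ML (MC_uniq X) (fun L h => (inMC X L).1 h).
have h3 := fsubset_leq_card DR; have h4 := cardfsUI P X.
rewrite !delta_e !deltaGR L9 -/ML [X `&` P]fsetIC.
exact: (arith3 h4 h3 h2 h1 hsum).
Qed.

Lemma deltaGR_le X : (delta n GR X <= delta n S X)%R.
Proof.
pose FF := fun ls : seq {fset T} => foldr (fun L acc => E L `|` acc) fset0 ls.
have c1 : forall ls, (#|` FF ls| <= \sum_(L <- ls) e L)%N.
  elim=> [|L ls IH] /=; first by rewrite big_nil.
  rewrite big_cons; apply: leq_trans (cardU_le _ _) _; rewrite leq_add2l; exact: IH.
have m1 : forall ls L K, L \in ls -> K \in E L -> K \in FF ls.
  elim=> [//|L' ls IH] L K /=; rewrite inE in_fsetU => /orP[/eqP<- ->//|Lls KL].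
  by rewrite (IH L K Lls KL) orbT.
have sub : E X `<=` FF (MC X).
  apply/fsubsetP => K; rewrite inE_E => /andP[sK]; rewrite asboolE => cK.
  have cKn := clq_size cK.
  have gK : is_clique n GR K.
    apply/clqGR_iff; split; first by rewrite cKn.
    exists K; split; first exact: fsubset_refl.
    have hK : [fset K] `<=` E K by rewrite fsub1set inE_E fsubset_refl asboolE.
    have := fsubset_leq_card hK; rewrite cardfs1 delta_e cKn /e; lia.
  have [L [sKL mL]] := mc_exists sK gK.
  apply: (m1 _ L); first exact/inMC.
  by rewrite inE_E sKL asboolE.
have h1 := leq_trans (fsubset_leq_card sub) (c1 (MC X)).
have h2 : (\sum_(L <- MC X) e L <= \sum_(L <- MC X) starsize n L)%N.
  by apply: leq_sum => L _; apply: E1.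
rewrite deltaGR delta_e; have := leq_trans h1 h2; rewrite /e; lia.
Qed.

Lemma clq_ext (R1 R2 : seq T -> Prop) X K : (forall t, {subset t <= X} -> (R1 t <-> R2 t)) ->
  K `<=` X -> is_clique n R1 K <-> is_clique n R2 K.
Proof.
move=> H sK; split=> [][c h]; split=> // t st ut tK; apply/H; try by apply: h.
- by move=> x /tK; apply: (fsubsetP sK).
- by move=> x /tK; apply: (fsubsetP sK).
Qed.

Lemma delta_ext (R1 R2 : seq T -> Prop) X : (forall t, {subset t <= X} -> (R1 t <-> R2 t)) ->
  delta n R1 X = delta n R2 X.
Proof.
move=> H; rewrite /delta; congr (_ - Posz _)%R.
rewrite big_seq_cond [RHS]big_seq_cond; apply: eq_bigl => K.
case KX : (K \in enum_fset (fpowerset X)) => //=.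
have sK : K `<=` X by rewrite -fpowersetE.
apply/idP/idP => /asboolP [sK' [cK mK]]; apply/asboolP; split=> //; split.
- exact/(clq_ext H sK).
- by move=> K' pK sK2 cK'; apply: (mK K' pK sK2); apply/(clq_ext H sK2).
- exact/(clq_ext H sK).
- by move=> K' pK sK2 cK'; apply: (mK K' pK sK2); apply/(clq_ext H sK2).
Qed.

Lemma delta0 (R : seq T -> Prop) : delta n R fset0 = 0%R.
Proof.
rewrite /delta big1_seq ?cardfs0 // => K /andP[_ KX].
have : K `<=` fset0 by rewrite -fpowersetE.
by rewrite fsubset0 => /eqP->; rewrite /starsize cardfs0.
Qed.

Lemma conj1 A : strong n S A (fun _ => True) -> forall t, {subset t <= A} ->
  (geoRel n S (fun x => x \in A) t <-> GR t).
Proof.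
move=> [_ [sA _]] t tA; split.
  move/geo_iff => [st ut [Y [tY [uY dY]]]]; apply/geo_iff; split=> //; exists Y; split=> //.
move/geo_iff => [st ut [Y [tY [_ dY]]]]; apply/geo_iff; split=> //; exists (Y `&` A); split.
  by move=> x xt; rewrite in_fsetI tY // tA.
split; first by move=> y; rewrite in_fsetI => /andP[].
have := submod Y A; have := sA (Y `|` A) (fsubsetUr _ _) (fun _ _ => I); move: dY; lia.
Qed.

Lemma main_in A : strong n S A (fun _ => True) ->
    (forall t : seq T, {subset t <= A} ->
       (geoRel n S (fun x => x \in A) t <-> geoRel n S (fun _ => True) t)) /\
    strong n (geoRel n S (fun _ => True)) A (fun _ => True) /\
    delta n S A = delta n (geoRel n S (fun x => x \in A)) A.
Proof.
move=> hA; have [_ [sA _]] := hA.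
split; first exact: conj1.
split.
  split; first by [].
  split.
    move=> X sAX _; have [R [sR hR]] := Rlemma A X.
    have := sA R (fsubset_trans (fsubsetUl _ _) sR) (fun _ _ => I).
    have eXA : X `&` A = A by apply/fsetIidPr.
    rewrite eXA /GR in hR; move: hR; lia.
  move=> Z _ _ _ X' _; have [R [sR hR]] := Rlemma A X'.
  have := sA R (fsubset_trans (fsubsetUl _ _) sR) (fun _ _ => I); move: hR; rewrite /GR; lia.
rewrite (delta_ext (conj1 hA)).
have [R [sR hR]] := Rlemma fset0 A.
have := sA R (fsubset_trans (fsubsetUr _ _) sR) (fun _ _ => I).
have := deltaGR_le A.
rewrite fsetI0 !delta0 /GR in hR *; move: hR; lia.
Qed.

End Main.

Theorem mainTheorem6 (n : nat) (T : countType) (S : seq T -> Prop) :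
  (0 < n)%N -> generic n S ->
  forall A : {fset T}, strong n S A (fun _ => True) ->
    (* hat A is the induced substructure of hat M on A *)
    (forall t : seq T, {subset t <= A} ->
       (geoRel n S (fun x => x \in A) t <-> geoRel n S (fun _ => True) t)) /\
    (* hat A <= hat M *)
    strong n (geoRel n S (fun _ => True)) A (fun _ => True) /\
    (* delta_s(A) = delta_s(hat A) *)
    delta n S A = delta n (geoRel n S (fun x => x \in A)) A.
Proof.
move=> n0 gen A hA; exact: (main_in n0 gen hA).
Qed.
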